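(* Fix $x\in\mathbb X$ and $\Lambda\Subset\mathbb X\setminus\{x\}$, a total order $\preceq$ on $\mathbf F(x)$, a set $\mathbf E\subset\mathbf F(x)$ with $\mathbf E\supset\{X\in\mathbf F(x)\mid W(X)\neq1,\ X\setminus\{x\}\subset\Lambda\}$, and for each $X\in\mathbf F(x)$ a total order (also denoted $\preceq$) on $X'$, with $X'_{\prec x'}=\{x''\in X'\mid x''\prec x'\}$ for $x'\in X'$. Suppose that $Z(\Lambda)\neq0$ and, unless $z(x)W(x)=0$, assume also that \[ Z_X(\Lambda\setminus\{x'\}\mid X'_{\prec x'})\neq0\quad\text{and}\quad \widehat z_X(x',\Lambda\setminus\{x'\}\mid X'_{\prec x'})\neq-1 \] for all $X\in\mathbf E$ and $x'\in X'$. Then \[ \widehat z(x,\Lambda)=z(x)\prod_{X\in\mathbf F(x):\,X'\subset\Lambda}\left(1+(W(X)-1)\prod_{x'\in X'}\frac{\widehat z_X(x',\Lambda\setminus\{x'\}\mid X'_{\prec x'})}{1+\widehat z_X(x',\Lambda\setminus\{x'\}\mid X'_{\prec x'})}\right). \]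
   Context: $\mathbb X$ is a finite or countably infinite set, $X\Subset\mathbb X$ means finite subset, $\mathbf F$ is the set of finite subsets of $\mathbb X$. Fix $z:\mathbb X\to\mathbb C$, $W:\mathbf F\to\mathbb C$; $f^X=\prod_{y\in X}f(y)$, $W(x)=W(\{x\})$; singletons $\{x\}$ are written $x$ inside arguments. For an interaction $V:\mathbf F\to\mathbb C$, the conditional interaction is $V(X\mid B)=\prod_{C\subset B}V(X\cup C)$ if $X\cap B=\varnothing$, $V(X\mid B)=0$ if $X=\{y\}$ with $y\in B$, and $V(X\mid B)=1$ otherwise; the Boltzmann factor is $\kappa(X\mid B)=\prod_{\varnothing\neq S\subset X}V(S\mid B)$; partition functions are $Z(X,\Lambda\mid B)=\sum_{Y\subset\Lambda\setminus X}z^{X\cup Y}\kappa(X\cup Y\mid B)$, $Z(\Lambda\mid B)=Z(\varnothing,\Lambda\mid B)$, with $B$ omitted when $B=\varnothing$; correlations $R(X,\Lambda\mid B)=Z(X,\Lambda\mid B)/Z(\Lambda\mid B)$ when the denominator is nonzero, and effective activities $\widehat z(y,\Lambda\mid B)=R(\{y\},\Lambda\mid B)$ for $y\notin\Lambda$. Unadorned $\kappa,Z,R,\widehat z$ refer to $V=W$. Let $\mathbf F(x)=\{X\Subset\mathbb X\mid x\in X\}$ and $X'=X\setminus\{x\}$. Given the total order $\preceq$ on $\mathbf F(x)$ (strict part $\prec$) and $X\in\mathbf F(x)$, define $W_X:\mathbf F\to\mathbb C$ by $W_X(Y)=W(Y)W(\{x\}\cup Y)$ if $x\notin Y$ and $\{x\}\cup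 Y\prec X$; $W_X(Y)=1$ if $x\in Y$ and $Y\neq X$; $W_X(Y)=W(Y)$ otherwise. Quantities built from $V=W_X$ are written $\kappa_X,Z_X,R_X,\widehat z_X$. Convention: a product is set equal to $0$ if at least one factor is well defined and equals $0$, even if other factors are ill-defined. *)

(* Defs.v *)
From mathcomp Require Import all_boot all_order all_algebra finmap.
From mathcomp Require Import complex Rstruct.
From Stdlib Require Reals.

Set Implicit Arguments.
Unset Strict Implicit.
Unset Printing Implicit Defensive.

Import Order.TTheory GRing.Theory Num.Theory.
Local Open Scope fset_scope.
Local Open Scope ring_scope.

Definition CC : fieldType := (Rdefinitions.R)[i].

Definition total_order_on (A : Type) (P : A -> Prop) (le : A -> A -> bool) :=
  [/\ (forall a, P a -> le a a),
      (forall a b, P a -> P b -> le a b -> le b a -> a = b),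
      (forall a b c, P a -> P b -> P c -> le a b -> le b c -> le a c)
    & (forall a b, P a -> P b -> le a b || le b a)].

Definition strict (A : eqType) (le : A -> A -> bool) : A -> A -> bool :=
  fun a b => le a b && (a != b).

Section Gas.
Variables (T : choiceType) (C : fieldType).

Definition fpow (f : T -> C) (X : {fset T}) : C := \prod_(y <- X) f y.

Definition cond_int (V : {fset T} -> C) (X B : {fset T}) : C :=
  if X `&` B == fset0 then \prod_(D <- fpowerset B) V (X `|` D)
  else if has (fun y => X == [fset y]) B then 0
  else 1.

Definition kappa (V : {fset T} -> C) (X B : {fset T}) : C :=
  \prod_(S <- fpowerset X | S != fset0) cond_int V S B.

Definition Zpart (z : T -> C) (V : {fset T} -> C) (X L B : {fset T}) : C :=
  \sum_(Y <- fpowerset (L `\` X)) fpow z (X `|` Y) * kappa V (X `|` Y) B.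

Definition Zfun (z : T -> C) (V : {fset T} -> C) (L B : {fset T}) : C :=
  Zpart z V fset0 L B.

(* correlation R(X, Lambda | B) (field division; only used where the
   denominator is nonzero or the convention "product = 0" applies) *)
Definition Rcorr (z : T -> C) (V : {fset T} -> C) (X L B : {fset T}) : C :=
  Zpart z V X L B / Zfun z V L B.

Definition zhat (z : T -> C) (V : {fset T} -> C) (y : T) (L B : {fset T}) : C :=
  Rcorr z V [fset y] L B.

Definition WX (lt : {fset T} -> {fset T} -> bool) (W : {fset T} -> C)
  (x : T) (X Y : {fset T}) : C :=
  if (x \notin Y) && lt (x |` Y) X then W Y * W (x |` Y)
  else if (x \in Y) && (Y != X) then 1
  else W Y.

Definition Xprec (ordX : {fset T} -> T -> T -> bool) (x : T) (X : {fset T})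
  (x' : T) : {fset T} :=
  [fset y in X `\ x | strict (ordX X) y x'].

End Gas.

(* Main.v *)
Require Import Defs.
From mathcomp Require Import all_boot all_order all_algebra finmap ring.
Import GRing.Theory.
Local Open Scope fset_scope.
Local Open Scope ring_scope.
Set Implicit Arguments. Unset Strict Implicit. Unset Printing Implicit Defensive.

Section Gen.
Variable K : choiceType.

Lemma fset_ind2 (P : {fset K} -> Prop) :
  P fset0 -> (forall a A, a \notin A -> P A -> P (a |` A)) -> forall A, P A.
Proof.
move=> P0 PS A; move: {2}#|`A| (erefl #|`A|) => n; elim: n A => [|n IH] A hA.
  by move/eqP: hA; rewrite cardfs_eq0 => /eqP ->.
case: (fset_0Vmem A) => [A0|[a aA]]; first by rewrite A0.
rewrite -(fsetD1K aA); apply: PS; first by rewrite !inE eqxx.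
by apply: IH; move: hA; rewrite (cardfsD1 a) aA add1n => -[].
Qed.

Lemma fsetUDK (A Y : {fset K}) : A `<=` Y -> A `|` (Y `\` A) = Y.
Proof.
move=> AY; apply/fsetP => y; rewrite !inE.
by case: (boolP (y \in A)) => //= yA; rewrite (fsubsetP AY y yA).
Qed.

Lemma fsetUKD (A Y : {fset K}) : [disjoint Y & A]%fset -> (A `|` Y) `\` A = Y.
Proof.
move=> d; apply/fsetP => y; rewrite !inE.
case: (boolP (y \in Y)) => yY; last by rewrite ?andbF ?orbF; case: (y \in A).
by rewrite orbT (fdisjointP d y yY).
Qed.

Section BigP.
Variables (R : Type) (idx : R) (op : Monoid.com_law idx).

Lemma big_enum_finmem (S : {fset K}) (F : K -> R) :
  \big[op/idx]_(i <- enum_finmem (mem S)) F i = \big[op/idx]_(i <- S) F i.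
Proof.
apply: perm_big; apply: uniq_perm; [exact: enum_finmem_uniq| exact: fset_uniq|].
by move=> y; rewrite enum_finmemE.
Qed.

Lemma big_fpowU1 a (S : {fset K}) (F : {fset K} -> R) : a \notin S ->
  \big[op/idx]_(Y <- fpowerset (a |` S)) F Y =
  op (\big[op/idx]_(Y <- fpowerset S) F Y) (\big[op/idx]_(Y <- fpowerset S) F (a |` Y)).
Proof.
move=> aS; rewrite (@big_fsetID _ _ op _ (fun Y : {fset K} => a \notin Y)); congr (op _ _).
  apply: eq_fbigl => Y; rewrite !inE /= !fpowersetE.
  apply/andP/idP => [[sub aY]|sub].
    apply/fsubsetP => y yY; move/fsubsetP: sub => /(_ y yY); rewrite !inE.
    by case: eqP => // ey; move: aY; rewrite -ey yY.
  split; first exact: fsubset_trans sub (fsubsetU1 _ _).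
  by apply: contra aS => /(fsubsetP sub).
have -> : [fset x in fpowerset (a |` S) | ~~ (a \notin x)] =
          [fset a |` Y | Y in fpowerset S].
  apply/fsetP => Y; rewrite !inE /= fpowersetE negbK; apply/andP/imfsetP => /=.
    move=> [sub aY]; exists (Y `\ a); last by rewrite fsetD1K.
    rewrite fpowersetE; apply/fsubsetP => y; rewrite !inE => /andP[ya yY].
    by move/fsubsetP: sub => /(_ y yY); rewrite !inE (negbTE ya).
  move=> [Y0 + ->]; rewrite fpowersetE => sub; split; last by rewrite !inE eqxx.
  apply/fsubsetP => y; rewrite !inE => /orP[->//|/(fsubsetP sub) ->]; by rewrite orbT.
rewrite big_imfset /=; last first.
  move=> Y1 Y2; rewrite !fpowersetE => s1 s2 e.
  have aY1 : a \notin Y1 by apply: contra aS => /(fsubsetP s1).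
  have aY2 : a \notin Y2 by apply: contra aS => /(fsubsetP s2).
  by rewrite -(fsetU1K aY1) e fsetU1K.
by [].
Qed.


Lemma big_fpowU (Y B : {fset K}) (F : {fset K} -> R) : [disjoint Y & B]%fset ->
  \big[op/idx]_(S <- fpowerset (Y `|` B)) F S =
  \big[op/idx]_(S <- fpowerset Y) \big[op/idx]_(C <- fpowerset B) F (S `|` C).
Proof.
elim/fset_ind2: Y F => [|a Y aY IH] F dis.
  by rewrite fset0U fpowerset0 big_seq_fset1; apply: eq_bigr => C _; rewrite fset0U.
move: dis; rewrite fdisjointU1X => /andP[aB dis].
rewrite -fsetUA big_fpowU1; last by rewrite !inE negb_or aY aB.
rewrite big_fpowU1 // !IH //; congr (op _ _).
by apply: eq_bigr => S _; apply: eq_bigr => C _; rewrite fsetUA.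
Qed.

Lemma big_fpow_restr (L B : {fset K}) (F : {fset K} -> R) :
  (forall Y, Y `<=` L -> ~~ [disjoint Y & B]%fset -> F Y = idx) ->
  \big[op/idx]_(Y <- fpowerset L) F Y = \big[op/idx]_(Y <- fpowerset (L `\` B)) F Y.
Proof.
move=> H; symmetry; apply: big_fset_incl; first by rewrite fpowersetS fsubsetDl.
move=> Y; rewrite fpowersetCE fpowersetE => YL; rewrite YL /=; exact: H.
Qed.

End BigP.
End Gen.

Section Gas2.
Variables (T : choiceType) (C : fieldType).
Implicit Types (V : {fset T} -> C) (z : T -> C).

Lemma fpowU z (B Y : {fset T}) : [disjoint Y & B]%fset ->
  fpow z (B `|` Y) = fpow z B * fpow z Y.
Proof.
elim/fset_ind2: Y => [|a Y aY IH] dis; first by rewrite fsetU0 /fpow big_seq_fset0 mulr1.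
move: dis; rewrite fdisjointU1X => /andP[aB dis].
rewrite fsetUCA /fpow !big_fsetU1 //; last by rewrite !inE negb_or aB.
by rewrite -[\big[_/_]_(i <- B `|` Y) _]/(fpow z (B `|` Y)) IH //= mulrCA.
Qed.

Lemma cond0 V S : cond_int V S fset0 = V S.
Proof. by rewrite /cond_int fsetI0 eqxx fpowerset0 big_seq_fset1 fsetU0. Qed.

Lemma kappa0E V X : kappa V X fset0 = \prod_(S <- fpowerset X | S != fset0) V S.
Proof. by apply: eq_bigr => S _; rewrite cond0. Qed.

Lemma big_fsetD1_cond (R : Type) (idx : R) (op : Monoid.com_law idx)
  (a : {fset T}) (A : {fset {fset T}}) F :
  \big[op/idx]_(S <- A `\ a) F S = \big[op/idx]_(S <- A | S != a) F S.
Proof.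
rewrite [RHS]big_fset_condE; apply: eq_fbigl => S; by rewrite !inE andbC.
Qed.

Lemma kappa_split V B Y : [disjoint Y & B]%fset ->
  kappa V (B `|` Y) fset0 = kappa V B fset0 * kappa V Y B.
Proof.
move=> dis; rewrite !kappa0E big_mkcond fsetUC big_fpowU //=.
rewrite (big_fsetD1 fset0) ?fpowersetE ?fsub0set //=; congr (_ * _).
  by rewrite [RHS]big_mkcond; apply: eq_bigr => S _; rewrite fset0U.
rewrite big_fsetD1_cond /kappa big_seq_cond [RHS]big_seq_cond.
apply: eq_bigr => S /andP[]; rewrite fpowersetE => SY SnZ.
have SB : S `&` B == fset0.
  rewrite fsetI_eq0; apply/fdisjointP => y yS.
  by move/fdisjointP: dis => /(_ y (fsubsetP SY y yS)).
rewrite /cond_int SB; apply: eq_bigr => D _.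
by rewrite fsetU_eq0 negb_and SnZ.
Qed.


Lemma split_pt z V B Y : [disjoint Y & B]%fset ->
  fpow z (B `|` Y) * kappa V (B `|` Y) fset0 =
  fpow z B * kappa V B fset0 * (fpow z Y * kappa V Y B).
Proof. by move=> dis; rewrite fpowU // kappa_split // mulrACA. Qed.

Lemma kappa_meet V Y B y : y \in Y -> y \in B -> kappa V Y B = 0.
Proof.
move=> yY yB; rewrite /kappa big_mkcond (big_fsetD1 [fset y]) /=; last first.
  by rewrite fpowersetE fsub1set.
have -> : [fset y] != fset0 by apply/eqP => /fsetP /(_ y); rewrite !inE eqxx.
rewrite /cond_int.
have -> : ([fset y] `&` B == fset0) = false.
  by apply/negbTE/eqP => /fsetP /(_ y); rewrite !inE eqxx yB.
have -> : has (fun y0 => [fset y] == [fset y0]) B by apply/hasP; exists y.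
by rewrite mul0r.
Qed.

Lemma ndisj_ex (Y B : {fset T}) : ~~ [disjoint Y & B]%fset -> exists2 y, y \in Y & y \in B.
Proof.
move=> nd; case: (fset_0Vmem (Y `&` B)) => [e|[y]].
  by move: nd; rewrite -fsetI_eq0 e eqxx.
by rewrite !inE => /andP[??]; exists y.
Qed.

Lemma Zfun_restr z V L B :
  Zfun z V L B = \sum_(Y <- fpowerset (L `\` B)) fpow z Y * kappa V Y B.
Proof.
rewrite /Zfun /Zpart fsetD0 (big_fpow_restr _ (B := B)).
  by apply: eq_bigr => Y _; rewrite fset0U.
move=> Y _ /ndisj_ex [y yY yB]; by rewrite fset0U (kappa_meet _ yY yB) mulr0.
Qed.

Lemma Zpart1_restr z V L0 B m :
  Zpart z V [fset m] L0 B =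
  \sum_(Y <- fpowerset ((L0 `\ m) `\` B)) fpow z (m |` Y) * kappa V (m |` Y) B.
Proof.
rewrite /Zpart (big_fpow_restr _ (B := B)) //.
move=> Y _ /ndisj_ex [y yY yB].
by rewrite (@kappa_meet _ _ _ y) ?mulr0 // !inE yY orbT.
Qed.

Lemma Pd_split1 z V L B m : B `<=` L -> m \in L -> m \notin B ->
  Zpart z V B L fset0 =
  fpow z B * kappa V B fset0 * (Zfun z V (L `\ m) B + Zpart z V [fset m] (L `\ m) B).
Proof.
move=> BL mL mB; rewrite {1}/Zpart.
rewrite (eq_big_seq (fun Y => fpow z B * kappa V B fset0 * (fpow z Y * kappa V Y B))); last first.
  move=> Y; rewrite fpowersetCE => /andP[_ dis]; exact: split_pt.
rewrite -big_distrr /=; congr (_ * _).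
rewrite Zfun_restr Zpart1_restr.
have e1 : L `\` B = m |` ((L `\ m) `\` B).
  apply/fsetP => y; rewrite !inE; case: (eqVneq y m) => [->|] //=.
  by rewrite mL mB.
have e2 : (L `\ m) `\ m `\` B = (L `\ m) `\` B.
  by apply/fsetP => y; rewrite !inE; case: (eqVneq y m).
rewrite e1 e2 big_fpowU1; last by rewrite !inE eqxx andbF. by [].
Qed.

Lemma Pd_split2 z V L B m : B `<=` L -> m \in L -> m \notin B ->
  Zpart z V (m |` B) L fset0 =
  fpow z B * kappa V B fset0 * Zpart z V [fset m] (L `\ m) B.
Proof.
move=> BL mL mB; rewrite {1}/Zpart Zpart1_restr.
have e2 : L `\` (m |` B) = (L `\ m) `\` B.
  by apply/fsetP => y; rewrite !inE; case: (y == m); case: (y \in B).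
have e3 : (L `\ m) `\ m `\` B = (L `\ m) `\` B.
  by apply/fsetP => y; rewrite !inE; case: (eqVneq y m).
rewrite e2 e3 big_distrr /=; apply: eq_big_seq => Y.
rewrite fpowersetCE => /andP[_ dis].
rewrite -fsetUA fsetUCA split_pt //.
rewrite fdisjointU1X mB /=; apply/fdisjointP => y yY.
exact: (fdisjointP dis).
Qed.

End Gas2.

Section Ord.
Variable K : choiceType.

Lemma seq_max (P : K -> Prop) le (s : seq K) : total_order_on P le ->
  s != [::] -> (forall a, a \in s -> P a) ->
  exists2 m, m \in s & forall b, b \in s -> le b m.
Proof.
move=> [refl anti tr tot]; elim: s => [//|a s IH] _ Ps.
case: s IH Ps => [|b s] IH Ps.
  exists a; first by rewrite inE.
  by move=> b; rewrite inE => /eqP ->; apply: refl; apply: Ps; rewrite inE.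
have Pa : P a by apply: Ps; rewrite inE eqxx.
have [m mIn mMax] : exists2 m, m \in b :: s & forall c, c \in b :: s -> le c m.
  by apply: IH => // c cIn; apply: Ps; rewrite inE cIn orbT.
have Pm : P m by apply: Ps; rewrite inE mIn orbT.
case/orP: (tot a m Pa Pm) => [am|ma].
  exists m; first by rewrite inE mIn orbT.
  by move=> c; rewrite inE => /orP[/eqP ->//|/mMax].
exists a; first by rewrite inE eqxx.
move=> c; rewrite inE => /orP[/eqP ->|cIn]; first exact: refl.
apply: (tr c m a) => //; last exact: mMax.
by apply: Ps; rewrite inE cIn orbT.
Qed.

Lemma order_ind (P : K -> Prop) le (A : {fset K}) (Q : {fset K} -> Prop) :
  total_order_on P le -> (forall a, a \in A -> P a) -> Q fset0 ->
  (forall m, m \in A -> Q [fset y in A | strict le y m] ->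
     Q (m |` [fset y in A | strict le y m])) -> Q A.
Proof.
move=> tot PA Q0 step.
have [refl anti tr to] := tot.
suff H : forall n B, #|`B| = n -> B `<=` A ->
  (forall b a, b \in B -> a \in A -> strict le a b -> a \in B) -> Q B.
  by apply: (H _ A erefl (fsubset_refl _)) => b a _ aA _.
elim=> [|n IH] B cB BA dc.
  by move/eqP: cB; rewrite cardfs_eq0 => /eqP ->.
have PB : forall a, a \in enum_fset B -> P a by move=> a aB; apply: PA; apply: (fsubsetP BA).
have [b0 b0B] : exists b0, b0 \in B.
  case: (fset_0Vmem B) => [e|[b0 ?]]; last by exists b0.
  by move: cB; rewrite e cardfs0.
have ne : enum_fset B != [::].
  by apply/eqP => e; move: b0B; rewrite -[b0 \in B]/(b0 \in enum_fset B) e.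
have [m mB mMax] := seq_max tot ne PB.
have mA : m \in A by apply: (fsubsetP BA).
have eB : B = m |` [fset y in A | strict le y m].
  apply/fsetP => y; rewrite !inE /strict; case: (eqVneq y m) => [->|ym] /=; first by rewrite mB.
  rewrite andbT; apply/idP/andP => [yB|[yA ylm]].
    by split; [apply: (fsubsetP BA) | apply: mMax].
  by apply: (dc m y mB yA); rewrite /strict ylm ym.
rewrite eB; apply: step => //; apply: IH.
- move: cB; rewrite eB cardfsU1 !inE /strict eqxx andbF andbF /=.
  by rewrite add1n => -[].
- by apply/fsubsetP => y; rewrite !inE => /andP[].
- move=> b a; rewrite !inE /strict => /andP[bA /andP[blm bm]] aA /andP[alb ab].
  rewrite aA /= (tr a b m) //=; try by apply: PA.
  apply/eqP => am; move: alb; rewrite am => mlb.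
  by move/eqP: bm; apply; apply: anti => //; apply: PA.
all: by apply: PA.
Qed.
End Ord.

Section Rho.
Variables (T : choiceType) (C : fieldType).

Lemma rho (z : T -> C) V (L A : {fset T}) ord : A `<=` L ->
  total_order_on (fun y => y \in A) ord ->
  (forall a, a \in A ->
     Zfun z V (L `\ a) [fset y in A | strict ord y a] != 0 /\
     zhat z V a (L `\ a) [fset y in A | strict ord y a] != -1) ->
  Zpart z V A L fset0 = Zfun z V L fset0 *
    \prod_(a <- A) (zhat z V a (L `\ a) [fset y in A | strict ord y a] /
                    (1 + zhat z V a (L `\ a) [fset y in A | strict ord y a])).
Proof.
move=> AL tot H.
apply: (order_ind (P := fun y => y \in A) (le := ord) (A := A)
  (Q := fun B => Zpart z V B L fset0 = Zfun z V L fset0 *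
    \prod_(a <- B) (zhat z V a (L `\ a) [fset y in A | strict ord y a] /
                    (1 + zhat z V a (L `\ a) [fset y in A | strict ord y a])))) => //.
  by rewrite big_seq_fset0 mulr1.
move=> m mA IHQ.
set B := [fset y in A | strict ord y m] in IHQ *.
have BL : B `<=` L.
  apply/fsubsetP => y; rewrite !inE => /andP[yA _]; exact: (fsubsetP AL).
have mL : m \in L by apply: (fsubsetP AL).
have mB : m \notin B by rewrite !inE /strict eqxx andbF andbF.
rewrite Pd_split2 // big_fsetU1 //.
rewrite (Pd_split1 _ _ BL mL mB) in IHQ.
have [hn hz] := H m mA; rewrite -/B in hn hz.
move: hz; rewrite /zhat /Rcorr.
rewrite mulrCA -IHQ.
set n := Zfun z V (L `\ m) B in hn *.
set q := Zpart z V [fset m] (L `\ m) B.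
set c := fpow z B * kappa V B fset0.
move=> hz.
have hnq : n + q != 0.
  apply: contra hz => /eqP e; apply/eqP.
  have -> : q = - n by apply/eqP; rewrite -subr_eq0 opprK addrC e.
  by rewrite mulNr divff.
have -> : 1 + q / n = (n + q) / n by rewrite mulrDl divff.
field; by rewrite hn hnq.
Qed.
End Rho.

Lemma fsetU1_neq0 (T : choiceType) (a : T) S : (a |` S != fset0) = true.
Proof. by apply/eqP => /fsetP /(_ a); rewrite !inE eqxx. Qed.
Lemma fset1_neq0 (T : choiceType) (a : T) : ([fset a] != fset0) = true.
Proof. by apply/eqP => /fsetP /(_ a); rewrite !inE eqxx. Qed.

Section Main.
Variables (T : choiceType) (C : fieldType).
Variables (z : T -> C) (W : {fset T} -> C) (x : T) (Lam : {fset T}).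
Hypothesis xL : x \notin Lam.

Definition weight (p : {fset T} -> bool) (Y : {fset T}) : C :=
  \prod_(S <- fpowerset Y | S != fset0) (W S * (if p (x |` S) then W (x |` S) else 1)).

Definition G (p : {fset T} -> bool) : C :=
  \sum_(Y <- fpowerset Lam) fpow z Y * weight p Y.

Definition Rel : {fset {fset T}} :=
  [fset X in fpowerset (x |` Lam) | (x \in X) && (X != [fset x])].

Lemma kappa_WX lt M Y : x \notin Y ->
  kappa (WX lt W x M) Y fset0 = weight (fun X0 => lt X0 M) Y.
Proof.
move=> xY; rewrite kappa0E /weight big_seq_cond [RHS]big_seq_cond.
apply: eq_bigr => S /andP[]; rewrite fpowersetE => SY _.
have xS : x \notin S by apply: contra xY => /(fsubsetP SY).
rewrite /WX xS /=; case: (lt (x |` S) M) => //.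
by rewrite (negbTE xS) /= mulr1.
Qed.

Lemma Zfun_G lt M : Zfun z (WX lt W x M) Lam fset0 = G (fun X0 => lt X0 M).
Proof.
rewrite /Zfun /Zpart fsetD0 /G big_seq [RHS]big_seq; apply: eq_bigr => Y.
rewrite fpowersetE fset0U => YL; rewrite kappa_WX //.
by apply: contra xL => /(fsubsetP YL).
Qed.

Lemma Zfun_G0 : Zfun z W Lam fset0 = G (fun _ => false).
Proof.
rewrite /Zfun /Zpart fsetD0 /G; apply: eq_bigr => Y _.
rewrite fset0U kappa0E /weight; congr (_ * _); apply: eq_bigr => S _.
by rewrite mulr1.
Qed.

Lemma Zpart_G1 : Zpart z W [fset x] Lam fset0 = z x * W [fset x] * G (fun _ => true).
Proof.
have e : Lam `\ x = Lam.
  by apply/fsetP => y; rewrite !inE; case: (eqVneq y x) => // ->; rewrite (negbTE xL).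
rewrite /Zpart e /G big_distrr /= big_seq [RHS]big_seq; apply: eq_bigr => Y.
rewrite fpowersetE => YL.
have xY : x \notin Y by apply: contra xL => /(fsubsetP YL).
rewrite /fpow big_fsetU1 //= -/(fpow z Y) kappa0E big_mkcond big_fpowU1 //=.
rewrite /weight big_split /=.
rewrite [X in _ * (_ * X) = _](big_fsetD1 fset0) ?fpowersetE ?fsub0set //=.
rewrite fsetU0 fset1_neq0 big_fsetD1_cond -big_mkcond.
rewrite [X in W [fset x] * X](eq_bigr (fun S => W (x |` S))); last by move=> S _; rewrite fsetU1_neq0.
ring.
Qed.


Lemma relS S : S `<=` Lam -> S != fset0 -> x |` S \in Rel.
Proof.
move=> SL Sn; rewrite !inE fpowersetE ?inE ?eqxx /=. apply/andP; split.
  by apply/fsubsetP => y; rewrite !inE => /orP[->//|/(fsubsetP SL) ->]; rewrite orbT.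
case: (fset_0Vmem S) => [e|[s sS]]; first by rewrite e eqxx in Sn.
apply/eqP => /fsetP /(_ s); rewrite !inE sS orbT.
have : s \in Lam by apply: (fsubsetP SL).
by case: (eqVneq s x) => [->|//]; rewrite (negbTE xL).
Qed.

Lemma sub_notx Y : Y `<=` Lam -> x \notin Y.
Proof. by move=> YL; apply: contra xL => /(fsubsetP YL). Qed.

Lemma weight_ext p p' Y : Y `<=` Lam -> (forall X, X \in Rel -> p X = p' X) ->
  weight p Y = weight p' Y.
Proof.
move=> YL H; rewrite /weight big_seq_cond [RHS]big_seq_cond; apply: eq_bigr => S.
rewrite fpowersetE => /andP[SY Sn]; rewrite H //; apply: relS => //.
exact: fsubset_trans SY YL.
Qed.

Lemma G_ext p p' : (forall X, X \in Rel -> p X = p' X) -> G p = G p'.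
Proof.
move=> H; rewrite /G big_seq [RHS]big_seq; apply: eq_bigr => Y; rewrite fpowersetE => YL.
by rewrite (weight_ext (p' := p')).
Qed.

Lemma weight_add p m Y : m \in Rel -> ~~ p m -> Y `<=` Lam ->
  weight (fun X => (X == m) || p X) Y = weight p Y * (if m `\ x `<=` Y then W m else 1).
Proof.
move=> mR pm YL; move: mR; rewrite !inE fpowersetE => /andP[mS /andP[xm mx]].
have xY := sub_notx YL.
have m'n : m `\ x != fset0.
  apply: contra mx => /eqP e; apply/eqP; rewrite -(fsetD1K xm) e fsetU0 //.
transitivity (\prod_(S <- fpowerset Y | S != fset0)
   ((W S * (if p (x |` S) then W (x |` S) else 1)) * (if S == m `\ x then W m else 1))).
  rewrite /weight big_seq_cond [RHS]big_seq_cond; apply: eq_bigr => S.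
  rewrite fpowersetE => /andP[SY _].
  have xS : x \notin S by apply: contra xY => /(fsubsetP SY).
  have -> : (x |` S == m) = (S == m `\ x).
    apply/eqP/eqP => [<-|->]; first by rewrite fsetU1K.
    by rewrite fsetD1K.
  case: (eqVneq S (m `\ x)) => [->|_] /=; last by rewrite mulr1.
  by rewrite fsetD1K // (negbTE pm) /= mulr1.
rewrite big_split /=; congr (_ * _).
rewrite big_mkcond /=.
case: ifP => sub.
  rewrite (big_fsetD1 (m `\ x)) ?fpowersetE //= m'n eqxx big1_fset ?mulr1 //.
  by move=> S; rewrite !inE => /andP[/negbTE -> _] _; case: (S != fset0).
rewrite big1_fset // => S; rewrite fpowersetE => SY _.
case: (eqVneq S (m `\ x)) => [e|]; last by case: (S != fset0).
by rewrite -e SY in sub.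
Qed.

Lemma G_step p m : m \in Rel -> ~~ p m ->
  G (fun X => (X == m) || p X) =
  G p + (W m - 1) * \sum_(Y <- fpowerset Lam | m `\ x `<=` Y) fpow z Y * weight p Y.
Proof.
move=> mR pm; rewrite /G big_distrr /= [X in _ = _ + X]big_mkcond /= -big_split /= big_seq [RHS]big_seq.
apply: eq_bigr => Y; rewrite fpowersetE => YL; rewrite weight_add //.
by case: ifP => _; rewrite ?mulr0 ?addr0 ?mulr1 //; ring.
Qed.

Lemma reindex (A : {fset T}) (F : {fset T} -> C) : A `<=` Lam ->
  \sum_(Y <- fpowerset Lam | A `<=` Y) F Y = \sum_(Y <- fpowerset (Lam `\` A)) F (A `|` Y).
Proof.
move=> AL; rewrite big_fset_condE.
have -> : [fset Y in fpowerset Lam | A `<=` Y] = [fset A `|` Y | Y in fpowerset (Lam `\` A)].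
  apply/fsetP => Y; rewrite !inE /= fpowersetE; apply/andP/imfsetP => /=.
    move=> [YL AY]; exists (Y `\` A); first by rewrite fpowersetE fsetSD.
    by rewrite fsetUDK.
  move=> [Y0 + ->]; rewrite fpowersetCE => /andP[Y0L _]; split; last exact: fsubsetUl.
  by rewrite fsubUset AL.
rewrite big_imfset /=; first by apply: big_enum_finmem.
move=> Y1 Y2; rewrite !fpowersetCE => /andP[_ d1] /andP[_ d2] e.
by rewrite -(fsetUKD d1) e fsetUKD.
Qed.


Lemma H_ident lt m p : m \in Rel -> (forall X, X \in Rel -> p X = lt X m) ->
  \sum_(Y <- fpowerset Lam | m `\ x `<=` Y) fpow z Y * weight p Y =
  Zpart z (WX lt W x m) (m `\ x) Lam fset0.
Proof.
move=> mR H.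
have m'L : m `\ x `<=` Lam.
  move: mR; rewrite !inE fpowersetE => /andP[mS _].
  apply/fsubsetP => y; rewrite !inE => /andP[yx ym].
  by move/fsubsetP: mS => /(_ y ym); rewrite !inE (negbTE yx).
rewrite reindex // /Zpart big_seq [RHS]big_seq; apply: eq_bigr => Y.
rewrite fpowersetCE => /andP[YL _].
have UL : m `\ x `|` Y `<=` Lam by rewrite fsubUset m'L YL.
rewrite kappa_WX ?sub_notx //; congr (_ * _); exact: weight_ext.
Qed.

Definition fac le ordX (X : {fset T}) : C :=
  1 + (W X - 1) * \prod_(x' <- X `\ x)
     (zhat z (WX (strict le) W x X) x' (Lam `\ x') (Xprec ordX x X x') /
      (1 + zhat z (WX (strict le) W x X) x' (Lam `\ x') (Xprec ordX x X x'))).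

Lemma main_gen (le : {fset T} -> {fset T} -> bool)
  (E : {fset T} -> Prop) (ordX : {fset T} -> T -> T -> bool) :
  total_order_on (fun X : {fset T} => x \in X) le ->
  (forall X, x \in X -> W X != 1 -> X `\ x `<=` Lam -> E X) ->
  (forall X, x \in X -> total_order_on (fun y => y \in X `\ x) (ordX X)) ->
  Zfun z W Lam fset0 != 0 ->
  (z x * W [fset x] != 0 ->
     forall X, E X -> forall x', x' \in X `\ x ->
       Zfun z (WX (strict le) W x X) (Lam `\ x') (Xprec ordX x X x') != 0 /\
       zhat z (WX (strict le) W x X) x' (Lam `\ x') (Xprec ordX x X x') != -1) ->
  zhat z W x Lam fset0 =
  z x * \prod_(X <- fpowerset (x |` Lam) | x \in X) fac le ordX X.
Proof.
move=> tot Ehyp ordtot Z0 Hnd.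
have facx : fac le ordX [fset x] = W [fset x].
  by rewrite /fac fsetDv big_seq_fset0 mulr1 addrC subrK.
have Rsplit : \prod_(X <- fpowerset (x |` Lam) | x \in X) fac le ordX X =
    W [fset x] * \prod_(X <- Rel) fac le ordX X.
  rewrite big_fset_condE (big_fsetD1 [fset x]); last first.
    by rewrite !inE fpowersetE fsub1set !inE eqxx.
  rewrite facx; congr (_ * _); apply: eq_fbigl => X; rewrite !inE andbC.
  by rewrite andbA.
rewrite Rsplit /zhat /Rcorr Zpart_G1.
rewrite (G_ext (p' := fun X => X \in Rel)); last by move=> X ->.
have [h|h] := eqVneq (z x * W [fset x]) 0.
  by rewrite h !mul0r mulrA h mul0r.
suff key : G (fun X => X \in Rel) = Zfun z W Lam fset0 * \prod_(X <- Rel) fac le ordX X.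
  by rewrite key; field.
pose Q := fun D : {fset {fset T}} => G (fun X => X \in D) = Zfun z W Lam fset0 * \prod_(X <- D) fac le ordX X.
have := @order_ind _ (fun X : {fset T} => x \in X) le Rel Q tot.
move=> OI; apply: OI.
- by move=> X; rewrite !inE => /andP[_ /andP[]].
- rewrite /Q big_seq_fset0 mulr1 Zfun_G0; apply: G_ext => X _; by rewrite inE.
move=> m mR; rewrite /Q => IHQ.
set B := [fset y in Rel | strict le y m] in IHQ *.
have mB : m \notin B by rewrite !inE /strict eqxx !andbF.
rewrite (G_ext (p' := fun X => (X == m) || (X \in B))); last by move=> X _; rewrite !inE.
rewrite G_step //.
have -> : \prod_(X <- m |` B) fac le ordX X = fac le ordX m * \prod_(X <- B) fac le ordX X.
  by rewrite big_fsetU1.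
have GB : G (fun X => X \in B) = Zfun z (WX (strict le) W x m) Lam fset0.
  by rewrite Zfun_G; apply: G_ext => X XR; rewrite !inE; move: XR; rewrite !inE => ->.
rewrite (H_ident (lt := strict le)) //; last by move=> X XR; rewrite !inE; move: XR; rewrite !inE => ->.
have [Wm|Wm] := eqVneq (W m) 1.
  by rewrite IHQ /fac Wm subrr !mul0r !addr0 mul1r.
move: mR; rewrite !inE fpowersetE => /andP[mS /andP[xm mx]].
have m'L : m `\ x `<=` Lam.
  apply/fsubsetP => y; rewrite !inE => /andP[yx ym].
  by move/fsubsetP: mS => /(_ y ym); rewrite !inE (negbTE yx).
have Em : E m by apply: Ehyp.
rewrite (rho (ord := ordX m)) //; last by move=> a aI; apply: Hnd.
  rewrite -GB IHQ /fac /Xprec /=; ring.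
exact: ordtot.
Qed.

End Main.

Theorem proposition4p5 (T : countType) (z : T -> CC) (W : {fset T} -> CC)
  (x : T) (Lam : {fset T}) (le : {fset T} -> {fset T} -> bool)
  (E : {fset T} -> Prop) (ordX : {fset T} -> T -> T -> bool) :
  x \notin Lam ->
  total_order_on (fun X : {fset T} => x \in X) le ->
  (forall X, E X -> x \in X) ->
  (forall X, x \in X -> W X != 1 -> X `\ x `<=` Lam -> E X) ->
  (forall X, x \in X -> total_order_on (fun y => y \in X `\ x) (ordX X)) ->
  Zfun z W Lam fset0 != 0 ->
  (z x * W [fset x] != 0 ->
     forall X, E X -> forall x', x' \in X `\ x ->
       Zfun z (WX (strict le) W x X) (Lam `\ x') (Xprec ordX x X x') != 0 /\
       zhat z (WX (strict le) W x X) x' (Lam `\ x') (Xprec ordX x X x') != -1) ->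
  zhat z W x Lam fset0 =
  z x * \prod_(X <- fpowerset (x |` Lam) | x \in X)
          (1 + (W X - 1) *
             \prod_(x' <- X `\ x)
               (zhat z (WX (strict le) W x X) x' (Lam `\ x') (Xprec ordX x X x') /
                (1 + zhat z (WX (strict le) W x X) x' (Lam `\ x') (Xprec ordX x X x')))).
Proof.
move=> xL tot EX Ehyp ordtot Z0 Hnd.
exact: (@main_gen _ _ z W x Lam xL le E ordX tot Ehyp ordtot Z0 Hnd).
Qed.
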